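(* Let ${\mathsf q}$ be a prime power, $t\in\{0,\ldots,{\mathsf K}-1\}$, $\mathbb{D}\in\mathbb{F}_{\mathsf q}^{{\mathsf K}\times{\mathsf N}}$, $\mathcal L$ a leader set, and $\mathcal A\subseteq[{\mathsf K}]\setminus\mathcal L$ with $|\mathcal A|=t+1$. Then, for every choice of the subfiles $F_{i,\mathcal W}$, $$W_{\mathcal A}=\sum_{\substack{\mathcal S\subseteq\mathcal A\cup\mathcal L:\ |\mathcal S|=t+1,\ \mathcal S\neq\mathcal A}}\beta_{\mathcal A,\mathcal S}\,W_{\mathcal S},\qquad \beta_{\mathcal A,\mathcal S}=(-1)^{1+\mathrm{Tot}(\overline{\mathrm{Ind}}_{\mathcal S})}\det\!\big(\mathbb{D}'_{\mathcal A\setminus\mathcal S,\ \mathrm{Ind}_{\mathcal S}}\big).$$ In particular every message $W_{\mathcal S}$ on the right-hand side satisfies $\mathcal S\cap\mathcal L\neq\emptyset$.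
   Context: Notation: sets of integers are listed increasingly, $\mathcal S(1)<\mathcal S(2)<\cdots$. $\mathbb{D}$ has rows $\mathbf y_k=(y_{k,1},\ldots,y_{k,{\mathsf N}})$. A leader set is $\mathcal L\subseteq[{\mathsf K}]$ with $|\mathcal L|=\mathrm{rank}_{\mathsf q}(\mathbb{D}_{\mathcal L})=\mathrm{rank}_{\mathsf q}(\mathbb{D})$, where $\mathbb{D}_{\mathcal L}$ is the submatrix of rows in $\mathcal L$. For each $k\in[{\mathsf K}]$ let $\mathbf x_k=(x_{k,1},\ldots,x_{k,|\mathcal L|})\in\mathbb{F}_{\mathsf q}^{|\mathcal L|}$ be the unique vector with $\mathbf y_k=\sum_{j}x_{k,j}\mathbf y_{\mathcal L(j)}$, and let $\mathbb{D}'$ be the ${\mathsf K}\times|\mathcal L|$ matrix with rows $\mathbf x_k$. Subfiles $F_{i,\mathcal W}\in\mathbb{F}_{\mathsf q}^{\ell}$ for $i\in[{\mathsf N}]$, $\mathcal W\subseteq[{\mathsf K}]$, $|\mathcal W|=t$. Blocks $B_{k,\mathcal W}=\sum_n y_{k,n}F_{n,\mathcal W}$. For $\mathcal S\subseteq[{\mathsf K}]$, $|\mathcal S|=t+1$, let $\mathcal L_{\mathcal S}=\mathcal S\cap\mathcal L$, $\mathcal N_{\mathcal S}=\mathcal S\setminus\mathcal L$, and $W_{\mathcal S}=\sum_{i\in[|\mathcal L_{\mathcal S}|]}(-1)^{i-1}B_{\mathcal L_{\mathcal S}(i),\mathcal S\setminus\{\mathcal L_{\mathcal S}(i)\}}+\sum_{j\in[|\mathcal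 N_{\mathcal S}|]}(-1)^{j-1}B_{\mathcal N_{\mathcal S}(j),\mathcal S\setminus\{\mathcal N_{\mathcal S}(j)\}}$. For $\mathcal S\subseteq\mathcal A\cup\mathcal L$: $\mathrm{Ind}_{\mathcal S}=\{i\in[|\mathcal L|]:\mathcal L(i)\in\mathcal S\}$, $\overline{\mathrm{Ind}}_{\mathcal S}=\{i\in[t+1]:\mathcal A(i)\notin\mathcal S\}$, and $\mathrm{Tot}(\mathcal X)$ is the sum of the elements of $\mathcal X$. When $|\mathcal S|=t+1$, $|\mathcal A\setminus\mathcal S|=|\mathrm{Ind}_{\mathcal S}|$, and $\mathbb{D}'_{\mathcal A\setminus\mathcal S,\mathrm{Ind}_{\mathcal S}}$ is the square submatrix of $\mathbb{D}'$ with rows indexed by $\mathcal A\setminus\mathcal S$ and columns indexed by $\mathrm{Ind}_{\mathcal S}$, both taken in increasing order. *)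

(* Defs.v *)
From HB Require Import structures.
From mathcomp Require Import all_boot all_order all_algebra all_field.
Set Implicit Arguments. Unset Strict Implicit. Unset Printing Implicit Defensive.
Import GRing.Theory.
Local Open Scope ring_scope.

(* Users are 'I_K (0-based; only the order matters). For a set X : {set 'I_K},
   enum X lists its elements increasingly, and enum_val j (j : 'I_#|X|) is the
   (j+1)-th smallest element X(j+1) of X. *)

Section Defs.
Variables (F : fieldType) (K N l : nat).

Definition rows_of (D : 'M[F]_(K, N)) (X : {set 'I_K}) : 'M[F]_(#|X|, N) :=
  \matrix_(j < #|X|) row (@enum_val _ (mem X) j) D.

Definition leader_set (D : 'M[F]_(K, N)) (L : {set 'I_K}) : Prop :=
  #|L| = \rank (rows_of D L) /\ \rank (rows_of D L) = \rank D.

Definition block (D : 'M[F]_(K, N)) (Fs : 'I_N -> {set 'I_K} -> 'rV[F]_l)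
  (k : 'I_K) (W : {set 'I_K}) : 'rV[F]_l :=
  \sum_(n < N) D k n *: Fs n W.

(* sum_{i in [|X|]} (-1)^{i-1} B_{X(i), S \ {X(i)}}  (written 0-based) *)
Definition alt_part (D : 'M[F]_(K, N)) (Fs : 'I_N -> {set 'I_K} -> 'rV[F]_l)
  (X S : {set 'I_K}) : 'rV[F]_l :=
  \sum_(i < #|X|) (-1) ^+ i *:
     block D Fs (@enum_val _ (mem X) i) (S :\ @enum_val _ (mem X) i).

Definition Wmsg (D : 'M[F]_(K, N)) (Fs : 'I_N -> {set 'I_K} -> 'rV[F]_l)
  (L S : {set 'I_K}) : 'rV[F]_l :=
  alt_part D Fs (S :&: L) S + alt_part D Fs (S :\: L) S.

(* Ind_S = {i in [|L|] : L(i) in S}, as a set of 0-based positions *)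
Definition Ind (L S : {set 'I_K}) : {set 'I_#|L|} :=
  [set j : 'I_#|L| | @enum_val _ (mem L) j \in S].

(* Tot(bar Ind_S), with bar Ind_S = {i in [t+1] : A(i) notin S}, 1-based *)
Definition TotBarInd (A S : {set 'I_K}) : nat :=
  (\sum_(i < #|A| | @enum_val _ (mem A) i \notin S) i.+1)%N.

Definition sub_entry (r : nat) (M : 'M[F]_(K, r)) (rs : seq 'I_K) (cs : seq 'I_r)
  (i j : nat) : F :=
  match onth rs i, onth cs j with
  | Some a, Some b => M a b
  | _, _ => 0
  end.

Definition minor (r : nat) (M : 'M[F]_(K, r)) (rs : seq 'I_K) (cs : seq 'I_r) : F :=
  \det (\matrix_(i < size rs, j < size rs) sub_entry M rs cs i j).

Definition beta (L : {set 'I_K}) (D' : 'M[F]_(K, #|L|)) (A S : {set 'I_K}) : F :=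
  (-1) ^+ (1 + TotBarInd A S) * minor D' (enum (A :\: S)) (enum (Ind L S)).

End Defs.

(* Main.v *)
Require Import Defs.
From HB Require Import structures.
From mathcomp Require Import all_boot all_order all_algebra all_field.
From mathcomp Require Import zify ring.
Set Implicit Arguments. Unset Strict Implicit. Unset Printing Implicit Defensive.
Import GRing.Theory.
Local Open Scope ring_scope.

Definition rem_at {T : Type} (i : nat) (s : seq T) := take i s ++ drop i.+1 s.

Lemma onth_rem_at (T : Type) (s : seq T) i a : onth (rem_at i s) a = onth s (bump i a).
Proof.
elim: s i a => [|x s IH] i a.
  by rewrite /rem_at; case: i => [|i]; rewrite /= !onth0n.
case: i => [|i]; first by rewrite /rem_at /= drop0.
case: a => [|a] //.
rewrite /rem_at /= -/(rem_at i s) IH /bump /=.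
by rewrite ltnS addnS.
Qed.

Lemma size_rem_at (T : Type) (s : seq T) i : (i < size s)%N -> size (rem_at i s) = (size s).-1.
Proof. move=> H; rewrite /rem_at size_cat size_take size_drop H. lia. Qed.

Definition sqdet (F : fieldType) n (g : nat -> nat -> F) := \det (\matrix_(i < n, j < n) g i j).

Lemma sqdet_eq (F : fieldType) n (g h : nat -> nat -> F) :
  (forall i j, (i < n)%N -> (j < n)%N -> g i j = h i j) -> sqdet n g = sqdet n h.
Proof.
move=> E; rewrite /sqdet; congr (\det _); apply/matrixP => i j; rewrite !mxE; exact: E.
Qed.

Lemma sqdet_expand (F : fieldType) n (g : nat -> nat -> F) p : (p <= n)%N ->
  sqdet n.+1 g = \sum_(i < n.+1) (-1) ^+ (i + p) * g i p *
     sqdet n (fun a b => g (bump i a) (bump p b)).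
Proof.
move=> Hp; rewrite /sqdet (expand_det_col _ (Ordinal (Hp : (p < n.+1)%N))).
apply: eq_bigr => i _; rewrite /cofactor mxE /= mulrA [_ * g _ _]mulrC.
congr (_ * _); congr (\det _); apply/matrixP => a b; rewrite !mxE //.
Qed.

Lemma minor_expand (F : fieldType) K r (M : 'M[F]_(K, r)) rs cs p n :
  size rs = n.+1 -> (p <= n)%N ->
  minor M rs cs = \sum_(i < n.+1) (-1) ^+ (i + p) * sub_entry M rs cs i p *
     minor M (rem_at i rs) (rem_at p cs).
Proof.
move=> Hs Hp; rewrite /minor -/(sqdet _ _) Hs (sqdet_expand _ Hp).
apply: eq_bigr => i _; congr (_ * _).
rewrite size_rem_at ?Hs //=.
apply: sqdet_eq => a b _ _; rewrite /sub_entry !onth_rem_at //.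
Qed.


Definition ordlt n : rel 'I_n := fun a b => (a < b)%N.

Lemma ordlt_trans n : transitive (@ordlt n).
Proof. move=> a b c; rewrite /ordlt; exact: ltn_trans. Qed.

Lemma enum_sorted n (X : {set 'I_n}) : sorted (@ordlt n) (enum X).
Proof.
have H : sorted (@ordlt n) (Finite.enum 'I_n).
  by rewrite -enumT; have := iota_ltn_sorted 0 n; rewrite -val_enum_ord sorted_map.
exact: (sorted_filter (@ordlt_trans n)).
Qed.

Lemma index_sorted n (s : seq 'I_n) x : sorted (@ordlt n) s -> x \in s ->
  index x s = count (fun y : 'I_n => (y < x)%N) s.
Proof.
elim: s => [|y s IH] //= Hs.
have Hall := order_path_min (@ordlt_trans n) Hs.
have Hs' := path_sorted Hs.
rewrite in_cons; case: (eqVneq y x) => [<-|ne] /= Hx.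
  rewrite ltnn add0n; apply/esym/eqP; rewrite -leqn0 leqNgt -has_count.
  by apply/hasP => -[z zs zy]; move/allP: Hall => /(_ z zs); rewrite /ordlt; lia.
rewrite IH //.
by move/allP: Hall => /(_ x Hx); rewrite /ordlt => ->.
Qed.

Definition lt_set n (k : 'I_n) := [set y : 'I_n | (y < k)%N].

Lemma count_enum_lt n (X : {set 'I_n}) (k : 'I_n) :
  count (fun y : 'I_n => (y < k)%N) (enum X) = #|X :&: lt_set k|.
Proof.
rewrite cardE -size_filter /enum_mem -filter_predI; congr size.
apply: eq_filter => y.
by rewrite /= in_setI [y \in lt_set k]inE andbC.
Qed.



Lemma index_enum_card n (X : {set 'I_n}) (k : 'I_n) : k \in X ->
  index k (enum X) = #|X :&: lt_set k|.
Proof.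
move=> kX. rewrite (index_sorted (enum_sorted X)).
  exact: count_enum_lt.
by rewrite mem_enum.
Qed.


Lemma rem_rem_at (T : eqType) (s : seq T) x : rem x s = rem_at (index x s) s.
Proof.
elim: s => [|y s IH] //=; rewrite /rem_at /=.
case: eqP => [->|ne] /=; first by rewrite drop0.
by rewrite IH.
Qed.

Lemma enum_setD1 (T : finType) (X : {set T}) x :
  enum (X :\ x) = rem_at (index x (enum X)) (enum X).
Proof.
rewrite -rem_rem_at rem_filter ?enum_uniq // /enum_mem -filter_predI.
by apply: eq_filter => y; rewrite !inE.
Qed.

Lemma index_enum_val (T : finType) (X : {set T}) (i : 'I_#|X|) :
  index (enum_val i) (enum X) = i.
Proof.
have x0 := enum_val i.
rewrite (enum_val_nth x0).
rewrite index_uniq //; last exact: enum_uniq.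
by rewrite -cardE; exact: ltn_ord.
Qed.


Lemma enum_val_mono n (X : {set 'I_n}) (i j : 'I_#|X|) :
  (enum_val i < enum_val j)%N = (i < j)%N.
Proof.
have H : forall a b : 'I_#|X|, (a < b)%N -> (enum_val a < enum_val b)%N.
  move=> a b ab. have x0 := enum_val a. rewrite !(enum_val_nth x0).
  have := sorted_ltn_nth (@ordlt_trans n) x0 (enum_sorted X).
  by apply; rewrite // inE -cardE ltn_ord.
case: (ltngtP i j) => [ij|ji|/val_inj ->]; first exact: H.
  by apply/negbTE; rewrite -leqNgt ltnW // H.
by rewrite ltnn.
Qed.


Lemma block_exp (F : fieldType) K N l (D : 'M[F]_(K, N)) (L : {set 'I_K})
  (D' : 'M[F]_(K, #|L|)) (Fs : 'I_N -> {set 'I_K} -> 'rV[F]_l) :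
  (forall k : 'I_K,
     row k D = \sum_(j < #|L|) D' k j *: row (@enum_val _ (mem L) j) D) ->
  forall k W, block D Fs k W =
    \sum_(j < #|L|) D' k j *: block D Fs (@enum_val _ (mem L) j) W.
Proof.
move=> H k W; rewrite /block.
have E n : D k n = \sum_(j < #|L|) D' k j * D (@enum_val _ (mem L) j) n.
  have := congr1 (fun M : 'rV[F]_N => M 0 n) (H k).
  by rewrite mxE summxE => ->; apply: eq_bigr => j _; rewrite !mxE.
under eq_bigr do rewrite E scaler_suml.
rewrite exchange_big /=; apply: eq_bigr => j _.
by rewrite scaler_sumr; apply: eq_bigr => n _; rewrite scalerA.
Qed.

Lemma leader_delta (F : fieldType) K N (D : 'M[F]_(K, N)) (L : {set 'I_K})
  (D' : 'M[F]_(K, #|L|)) :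
  leader_set D L ->
  (forall k : 'I_K,
     row k D = \sum_(j < #|L|) D' k j *: row (@enum_val _ (mem L) j) D) ->
  forall i j : 'I_#|L|, D' (@enum_val _ (mem L) i) j = (i == j)%:R.
Proof.
move=> [H1 _] H i j.
have free : row_free (rows_of D L) by rewrite /row_free -H1.
pose u : 'rV[F]_#|L| := row (@enum_val _ (mem L) i) D' - delta_mx 0 i.
have : u *m rows_of D L = 0 *m rows_of D L.
  rewrite mul0mx mulmx_sum_row.
  have -> : \sum_i0 u 0 i0 *: row i0 (rows_of D L) =
     row (@enum_val _ (mem L) i) D - row (@enum_val _ (mem L) i) D.
    rewrite {1}H.
    have -> : \sum_i0 u 0 i0 *: row i0 (rows_of D L) =
       \sum_i0 D' (@enum_val _ (mem L) i) i0 *: row (@enum_val _ (mem L) i0) D -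
       \sum_i0 (delta_mx 0 i : 'rV[F]_#|L|) 0 i0 *: row (@enum_val _ (mem L) i0) D.
      by rewrite -sumrB; apply: eq_bigr => i0 _; rewrite /u !mxE rowK scalerBl.
    congr (_ - _); rewrite (bigD1 i) //= big1 ?addr0; first by rewrite mxE !eqxx scale1r.
    by move=> i0 /negbTE ne; rewrite mxE ne andbF scale0r.
  by rewrite subrr.
move/(row_free_inj free) => /(congr1 (fun M : 'rV_#|L| => M 0 j)).
rewrite /u !mxE eqxx /= => /eqP; rewrite subr_eq0 => /eqP ->.
by rewrite eq_sym.
Qed.

Definition sg (F : fieldType) (n : nat) : F := (-1) ^+ n.

Lemma alt_partE (F : fieldType) K N l (D : 'M[F]_(K, N))
  (Fs : 'I_N -> {set 'I_K} -> 'rV[F]_l) (X S : {set 'I_K}) :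
  alt_part D Fs X S =
   \sum_(k in X) sg F (index k (enum X)) *: block D Fs k (S :\ k).
Proof.
rewrite /alt_part (big_enum_val (A := mem X)) /=; apply: eq_bigr => i _.
by rewrite index_enum_val.
Qed.

Lemma TotE K (A S : {set 'I_K}) :
  TotBarInd A S = (\sum_(a in A | a \notin S) (index a (enum A)).+1)%N.
Proof.
rewrite /TotBarInd (big_enum_val_cond (A := mem A) (fun a => a \notin S)) /=.
by apply: eq_bigr => i _; rewrite index_enum_val.
Qed.

Lemma Tot_add K (A W : {set 'I_K}) k : k \in A -> k \notin W ->
  (TotBarInd A (k |: W) + (index k (enum A)).+1)%N = TotBarInd A W.
Proof.
move=> kA kW; rewrite !TotE [RHS](bigD1 k) /=; last by rewrite kA.
rewrite addnC; congr (_ + _)%N; apply: eq_bigl => a.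
rewrite in_setU1 negb_or.
by case: (a \in A); case: (a == k); case: (a \in W).
Qed.

Lemma Tot_nA K (A W : {set 'I_K}) k : k \notin A ->
  TotBarInd A (k |: W) = TotBarInd A W.
Proof.
move=> kA; rewrite !TotE; apply: eq_bigl => a; rewrite in_setU1.
by case: eqP => [->|]; rewrite ?(negbTE kA).
Qed.

Lemma idx_nonleader K (A L W : {set 'I_K}) k :
  A \subset ~: L -> W \subset A :|: L -> k \in A -> k \notin W ->
  (index k (enum ((k |: W) :\: L)) + index k (enum (A :\: W)))%N
    = index k (enum A).
Proof.
move=> AnL WAL kA kW.
have kL : k \notin L by move/subsetP: AnL => /(_ k kA); rewrite inE.
rewrite !index_enum_card //; last 2 first.
- by rewrite inE kA kW.
- by rewrite inE kL in_setU1 eqxx.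
rewrite -(cardsID W (A :&: lt_set k)); congr (_ + _)%N; apply: eq_card => y;
  have hW := subsetP WAL y; have hA := subsetP AnL y; rewrite !inE in hW hA *.
  case: (eqVneq y k) => [->|ne]; first by rewrite ltnn !andbF.
  rewrite /=; move: hW hA; case: (y \in A); case: (y \in L); case: (y \in W); case: (y < k)%N => //=.
  1,2: move=> h1 h2; by [move: (h1 isT) | move: (h2 isT)].
by case: (y \in A); case: (y \in W); case: (y < k)%N.
Qed.


Lemma Ind_nL K (L W : {set 'I_K}) k : k \notin L -> Ind L (k |: W) = Ind L W.
Proof.
move=> kL; apply/setP => i; rewrite !inE.
case: eqP => [E|] //=; by have := enum_valP i; rewrite E (negbTE kL).
Qed.

Lemma Ind_L K (L W : {set 'I_K}) (j : 'I_#|L|) :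
  Ind L (@enum_val _ (mem L) j |: W) = j |: Ind L W.
Proof. by apply/setP => i; rewrite !inE (inj_eq enum_val_inj). Qed.

Lemma setD_U1 K (A W : {set 'I_K}) k : A :\: (k |: W) = (A :\: W) :\ k.
Proof.
apply/setP => y; rewrite !inE.
by case: (y == k); case: (y \in W); case: (y \in A).
Qed.

Lemma setD_U1n K (A W : {set 'I_K}) k : k \notin A -> A :\: (k |: W) = A :\: W.
Proof.
move=> kA; apply/setP => y; rewrite !inE.
by case: eqP => [->|]; rewrite ?(negbTE kA) ?andbF.
Qed.

Lemma Ind_img K (L W : {set 'I_K}) :
  (@enum_val _ (mem L)) @: Ind L W = W :&: L.
Proof.
apply/setP => y; apply/imsetP/idP => [[i Hi ->]|].
  by rewrite inE in Hi; rewrite inE Hi enum_valP.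
rewrite inE => /andP[yW yL]; exists (enum_rank_in yL y); last by rewrite enum_rankK_in.
by rewrite inE enum_rankK_in.
Qed.

Lemma card_R0 K t (L A W : {set 'I_K}) :
  A \subset ~: L -> W \subset A :|: L -> #|A| = t.+1 -> #|W| = t ->
  #|A :\: W| = (#|Ind L W|).+1.
Proof.
move=> AnL WAL cA cW.
have cI : #|Ind L W| = #|W :&: L| by rewrite -(Ind_img L W) card_imset //; exact: enum_val_inj.
have E : W :\: L = A :&: W.
  apply/setP => y; have hW := subsetP WAL y; have hA := subsetP AnL y; rewrite !inE in hW hA *.
  move: hW hA; case: (y \in A); case: (y \in L); case: (y \in W) => //= h1 h2; by [move: (h1 isT) | move: (h2 isT)].
have := cardsID W A; have := cardsID L W; rewrite E cI cA cW; lia.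
Qed.

Lemma idx_leader K (L W : {set 'I_K}) (j : 'I_#|L|) :
  index (@enum_val _ (mem L) j) (enum ((@enum_val _ (mem L) j |: W) :&: L))
  = index j (enum (j |: Ind L W)).
Proof.
rewrite !index_enum_card; last 2 first.
- by rewrite in_setU1 eqxx.
- by rewrite inE in_setU1 eqxx enum_valP.
rewrite -(card_imset _ (@enum_val_inj _ (mem L))); apply: eq_card => y.
apply/idP/imsetP => [|[i Hi ->]]; last first.
  rewrite !inE in Hi; rewrite !inE enum_valP (inj_eq enum_val_inj) enum_val_mono.
  by rewrite andbT.
rewrite !inE => /andP[/andP[yjW yL] ylt]; exists (enum_rank_in yL y); last by rewrite enum_rankK_in.
rewrite !inE -enum_val_mono -(inj_eq (@enum_val_inj _ (mem L))) !enum_rankK_in //.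
by rewrite ylt andbT.
Qed.

Lemma sgD (F : fieldType) m n : sg F (m + n) = sg F m * sg F n.
Proof. by rewrite /sg exprD. Qed.

Lemma sgK (F : fieldType) n : sg F n * sg F n = 1.
Proof. by rewrite -sgD /sg -signr_odd oddD addbb. Qed.

Lemma onth_nth' (T : Type) (s : seq T) x0 i : (i < size s)%N -> onth s i = Some (nth x0 s i).
Proof. by move=> H; rewrite onthE (nth_map x0). Qed.

Lemma minor_lap (F : fieldType) K r (M : 'M[F]_(K, r)) (rs : seq 'I_K) cs cs0 p j x0 :
  (0 < size rs)%N -> (p < size rs)%N -> onth cs p = Some j -> rem_at p cs = cs0 ->
  minor M rs cs = sg F p * \sum_(0 <= i < size rs)
      sg F i * M (nth x0 rs i) j * minor M (rem_at i rs) cs0.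
Proof.
move=> H0 Hp Hj Hc.
have Hs : size rs = (size rs).-1.+1 by rewrite prednK.
rewrite (minor_expand M cs (p := p) Hs); last by rewrite -ltnS -Hs.
rewrite -(big_mkord xpredT (fun i : nat => (-1) ^+ (i + p) * sub_entry M rs cs i p * minor M (rem_at i rs) (rem_at p cs))) -Hs mulr_sumr; apply: eq_big_nat => i /andP[_ Hi].
rewrite /sub_entry Hj (onth_nth' x0) // Hc /sg.
by rewrite addnC exprD; ring.
Qed.

Lemma minor_dup (F : fieldType) K r (M : 'M[F]_(K, r)) (rs : seq 'I_K) cs b1 b2 :
  (b1 < size rs)%N -> (b2 < size rs)%N -> b1 != b2 -> onth cs b1 = onth cs b2 ->
  minor M rs cs = 0.
Proof.
move=> h1 h2 ne E; rewrite /minor -det_tr.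
apply: (determinant_alternate (i1 := Ordinal h1) (i2 := Ordinal h2)) => // a.
by rewrite !mxE /sub_entry /= E.
Qed.

Definition coefS (F : fieldType) K (L : {set 'I_K}) (x : 'M[F]_(K, #|L|))
  (A S : {set 'I_K}) : F :=
  sg F (TotBarInd A S) * minor x (enum (A :\: S)) (enum (Ind L S)).

Definition sigma (F : fieldType) K (L S : {set 'I_K}) (k : 'I_K) : F :=
  if k \in L then sg F (index k (enum (S :&: L)))
  else sg F (index k (enum (S :\: L))).

Lemma sgS (F : fieldType) n : sg F n.+1 = - sg F n.
Proof. by rewrite /sg exprS mulN1r. Qed.

Lemma key (F : fieldType) K t (L A W : {set 'I_K}) (x : 'M[F]_(K, #|L|))
  (j : 'I_#|L|) (x0 : 'I_K) :
  A \subset ~: L -> #|A| = t.+1 -> W \subset A :|: L -> #|W| = t ->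
  (forall i j : 'I_#|L|, x (@enum_val _ (mem L) i) j = (i == j)%:R) ->
  \sum_(k in (A :|: L) :\: W) coefS x A (k |: W) * sigma F L (k |: W) k * x k j = 0.
Proof.
move=> AnL cA WAL cW xL.
set eLj := @enum_val _ (mem L) j.
set R0 := A :\: W. set J0 := Ind L W. set rs := enum R0.
have cR0 : #|R0| = (#|J0|).+1 by exact: card_R0 AnL WAL cA cW.
have srs : size rs = (#|J0|).+1 by rewrite /rs -cardE.
set NLsum := \sum_(0 <= i < size rs)
   sg F i * x (nth x0 rs i) j * minor x (rem_at i rs) (enum J0).
have NL : \sum_(k in ((A :|: L) :\: W) :\: L)
             coefS x A (k |: W) * sigma F L (k |: W) k * x k j
          = - (sg F (TotBarInd A W) * NLsum).
  transitivity (\sum_(k in R0) - (sg F (TotBarInd A W) *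
     (sg F (index k rs) * x k j * minor x (rem_at (index k rs) rs) (enum J0)))).
    apply: eq_big => k.
      rewrite !inE; have := subsetP AnL k; rewrite inE.
      by case: (k \in A); case: (k \in L); case: (k \in W) => //= ->.
    rewrite !inE => /andP[kL /andP[kW kAL]].
    have kA : k \in A by move: kAL; rewrite (negbTE kL) orbF.
    rewrite /coefS /sigma (negbTE kL) setD_U1 Ind_nL // enum_setD1 -/R0 -/rs -/J0.
    rewrite -(Tot_add kA kW) -(idx_nonleader AnL WAL kA kW) -/R0 -/rs.
    rewrite addnS sgS !sgD.
    set a := sg F (TotBarInd A (k |: W)); set b := sg F (index k _).
    set c := sg F (index k rs).
    rewrite -[LHS]mulr1 -(sgK F (index k rs)) -/c; ring.
  rewrite sumrN -mulr_sumr; congr (- (_ * _)).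
  rewrite (big_enum_val (A := mem R0)) /= /NLsum srs -cR0 big_mkord.
  apply: eq_bigr => i _.
  by rewrite (enum_val_nth x0) index_uniq // ?enum_uniq // -?cardE.
have xk : forall k, k \in L -> x k j = (k == eLj)%:R.
  move=> k kL; rewrite -{1}(enum_rankK_in kL kL) xL.
  by rewrite -(inj_eq (@enum_val_inj _ (mem L))) enum_rankK_in.
have eLjL : eLj \in L by exact: enum_valP.
have eLjA : eLj \notin A by apply/negP => /(subsetP AnL); rewrite inE eLjL.
rewrite (big_setID L) /= NL.
rewrite (eq_bigr (fun k => coefS x A (k |: W) * sigma F L (k |: W) k * (k == eLj)%:R));
  last by move=> k; rewrite inE => /andP[_ kL]; rewrite xk.
case: (boolP (eLj \in W)) => jW.
  rewrite big1; last first.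
    move=> k; rewrite !inE => /andP[/andP[kW _] _].
    by case: eqP kW => [->|]; rewrite ?jW // mulr0.
  rewrite add0r; apply/eqP; rewrite oppr_eq0 mulf_eq0; apply/orP; right.
  have jJ0 : j \in J0 by rewrite inE.
  set s := enum J0.
  have ss : size s = #|J0| by rewrite [RHS]cardE.
  have H1 : onth (rcons s j) #|J0| = Some j.
    by rewrite onthE map_rcons nth_rcons size_map ss ltnn eqxx.
  have H2 : rem_at #|J0| (rcons s j) = s.
    rewrite /rem_at -cats1 (take_size_cat _ ss) drop_oversize ?cats0 //.
    by rewrite size_cat /= ss addn1.
  have js : (index j s < #|J0|)%N by rewrite -ss index_mem mem_enum.
  have H3 : onth (rcons s j) (index j s) = Some j.
    rewrite onthE map_rcons nth_rcons size_map ss js (nth_map j) ?ss //.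
    by rewrite nth_index // mem_enum.
  have := @minor_lap _ _ _ x rs (rcons s j) s #|J0| j x0.
  rewrite srs => /(_ isT (leqnn _) H1 H2).
  rewrite (@minor_dup _ _ _ x rs (rcons s j) (index j s) #|J0|) ?srs ?H1 ?H3 //; last 2 first.
  - by rewrite ltnW.
  - by rewrite neq_ltn js.
  move/(congr1 (fun z => sg F #|J0| * z)); rewrite mulr0 mulrA sgK mul1r => E.
  by rewrite /NLsum srs -/s -E.
rewrite (bigD1 eLj) /=; last by rewrite !inE jW eLjL orbT.
rewrite eqxx mulr1 big1 ?addr0; last by move=> k /andP[_ ne]; rewrite (negbTE ne) mulr0.
have jJ0 : j \notin J0 by rewrite inE.
set cs := enum (j |: J0).
set p := index j cs.
have Hcs : size cs = #|J0|.+1 by rewrite /cs -cardE cardsU1 jJ0.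
have pj : (p < size cs)%N by rewrite index_mem mem_enum setU11.
have H1 : onth cs p = Some j by rewrite (onth_nth' j) // nth_index // mem_enum setU11.
have H2 : rem_at p cs = enum J0 by rewrite /p /cs -enum_setD1 setU1K.
have G1 : (0 < size rs)%N by rewrite srs.
have G2 : (p < size rs)%N by rewrite srs -Hcs.
have E := @minor_lap _ _ _ x rs cs (enum J0) p j x0 G1 G2 H1 H2.
rewrite -/NLsum in E.
rewrite /coefS /sigma eLjL Tot_nA // setD_U1n // Ind_L -/R0 -/rs -/J0 idx_leader -/J0 -/cs -/p E.
have -> : forall a b c : F, a * (b * c) * b = a * c * (b * b) by move=> a b c; ring.
by rewrite sgK mulr1 addrN.
Qed.

Lemma WmsgE (F : fieldType) K N l (D : 'M[F]_(K, N))
  (Fs : 'I_N -> {set 'I_K} -> 'rV[F]_l) (L S : {set 'I_K}) :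
  Wmsg D Fs L S = \sum_(k in S) sigma F L S k *: block D Fs k (S :\ k).
Proof.
rewrite /Wmsg !alt_partE [RHS](big_setID L) /=; congr (_ + _); apply: eq_bigr => k.
  by rewrite inE => /andP[_ kL]; rewrite /sigma kL.
by rewrite inE => /andP[/negbTE kL _]; rewrite /sigma kL.
Qed.

Lemma main_zero (F : fieldType) K N l t (D : 'M[F]_(K, N)) (L A : {set 'I_K})
  (D' : 'M[F]_(K, #|L|)) (Fs : 'I_N -> {set 'I_K} -> 'rV[F]_l) (x0 : 'I_K) :
  (forall k : 'I_K,
     row k D = \sum_(j < #|L|) D' k j *: row (@enum_val _ (mem L) j) D) ->
  (forall i j : 'I_#|L|, D' (@enum_val _ (mem L) i) j = (i == j)%:R) ->
  A \subset ~: L -> #|A| = t.+1 ->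
  \sum_(S : {set 'I_K} | (S \subset A :|: L) && (#|S| == t.+1)) coefS D' A S *: Wmsg D Fs L S = 0.
Proof.
move=> HD xL AnL cA.
pose bb (j : 'I_#|L|) W := block D Fs (@enum_val _ (mem L) j) W.
pose c S k j := coefS D' A S * sigma F L S k * D' k j.
have E1 : forall S, coefS D' A S *: Wmsg D Fs L S =
    \sum_(k in S) \sum_(j < #|L|) c S k j *: bb j (S :\ k).
  move=> S; rewrite WmsgE scaler_sumr; apply: eq_bigr => k _.
  rewrite (block_exp Fs HD) !scaler_sumr; apply: eq_bigr => j _.
  by rewrite !scalerA /c.
under eq_bigr do rewrite E1.
rewrite pair_big_dep /=.
rewrite (reindex_onto (fun p : {set 'I_K} * 'I_K => (p.2 |: p.1, p.2))
                      (fun p => (p.1 :\ p.2, p.2))) /=; last first.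
  by move=> [S k] /= /andP[_ kS]; rewrite setD1K.
pose Q W k := [&& (k |: W) \subset A :|: L, #|k |: W| == t.+1 & k \notin W].
rewrite (eq_bigl (fun p : {set 'I_K} * 'I_K => predT p.1 && Q p.1 p.2)); last first.
  move=> [W k] /=; rewrite setU11 andbT xpair_eqE eqxx andbT /Q -andbA.
  congr (_ && (_ && _)).
  case: (boolP (k \in W)) => kW; last by rewrite (setU1K kW) eqxx.
  by apply/negbTE/eqP => /setP/(_ k); rewrite !inE eqxx kW.
rewrite -(pair_big_dep predT Q (fun W k => \sum_(j < #|L|) c (k |: W) k j *: bb j ((k |: W) :\ k))) /=.
apply: big1 => W _.
rewrite (eq_bigr (fun k => \sum_(j < #|L|) c (k |: W) k j *: bb j W)); last first.
  by move=> k /and3P[_ _ kW]; rewrite setU1K.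
rewrite exchange_big /=; apply: big1 => j _; rewrite -scaler_suml.
case: (boolP ((W \subset A :|: L) && (#|W| == t))) => [/andP[WAL /eqP cW]|nW].
  rewrite (eq_bigl (fun k => k \in (A :|: L) :\: W)); last first.
    move=> k; rewrite /Q subUset sub1set WAL andbT cardsU1 cW inE.
    rewrite !inE; by case: (k \in W); case: (k \in A); case: (k \in L); rewrite /= ?add1n ?add0n ?eqxx ?andbT ?andbF // (gtn_eqF (ltnSn t)).
  have Hk := @key _ _ t L A W D' j x0 AnL cA WAL cW xL.
  by rewrite /c Hk scale0r.
rewrite big_pred0 ?scale0r // => k; apply/negbTE; apply: contra nW => /and3P[sub /eqP cs kW].
move: sub; rewrite subUset => /andP[_ ->] /=.
by move: cs; rewrite cardsU1 kW /= add1n => -[->].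
Qed.

Unset Implicit Arguments. Set Strict Implicit.

Theorem mainTheorem7 (F : finFieldType) (K N l t : nat)
  (D : 'M[F]_(K, N)) (L A : {set 'I_K}) (D' : 'M[F]_(K, #|L|))
  (Fs : 'I_N -> {set 'I_K} -> 'rV[F]_l) :
  (t < K)%N ->
  leader_set D L ->
  (forall k : 'I_K,
     row k D = \sum_(j < #|L|) D' k j *: row (@enum_val _ (mem L) j) D) ->
  A \subset ~: L ->
  #|A| = t.+1 ->
  Wmsg D Fs L A =
    \sum_(S : {set 'I_K} | [&& S \subset A :|: L, #|S| == t.+1 & S != A])
       beta D' A S *: Wmsg D Fs L S
  /\ (forall S : {set 'I_K},
        S \subset A :|: L -> #|S| = t.+1 -> S != A -> S :&: L != set0).
Proof.
move=> tK HL HD AnL cA.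
pose x0 : 'I_K := Ordinal tK.
have xL := leader_delta HL HD.
split; last first.
  move=> S SAL cS SA; apply: contra SA => /eqP SL0.
  rewrite eqEcard cS cA leqnn andbT.
  apply/subsetP => y yS; have := subsetP SAL y yS; rewrite inE => /orP[//|yL].
  have : y \in S :&: L by rewrite inE yS yL.
  by rewrite SL0 inE.
have Z := @main_zero _ _ _ _ t D L A D' Fs x0 HD xL AnL cA.
rewrite (bigD1 A) /= in Z; last by rewrite subsetUl cA eqxx.
have cAA : coefS D' A A = 1.
  rewrite /coefS; have -> : Ind L A = set0.
    apply/setP => i; rewrite !inE; apply/negbTE/negP => iA.
    by have := subsetP AnL _ iA; rewrite inE enum_valP.
  rewrite TotE big_pred0; last by move=> a; rewrite andbN.
  by rewrite setDv !enum_set0 /minor det_mx00 /sg expr0 mul1r.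
rewrite cAA scale1r in Z.
move/eqP: Z; rewrite addr_eq0 => /eqP ->.
rewrite -sumrN; apply: eq_big => S; first by rewrite andbA.
by move=> _; rewrite /beta /coefS exprD expr1 mulN1r mulNr scaleNr.
Qed.
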